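(* An $\mathbb{F}_q$-linear automorphism $\varphi$ of $\mathbb{F}_{q^m}$ is fully linear over $\mathbb{F}_{q^m}$ if and only if there exist $\beta\in\mathbb{F}_{q^m}^*$ and $j\in\{0,1,\dots,m-1\}$ such that $\varphi(\mu)=\beta\,\mu^{q^j}$ for all $\mu\in\mathbb{F}_{q^m}$.
   Context: $q$ is a prime power (the paper takes $q$ a power of $2$). An $\mathbb{F}_q$-linear automorphism of $\mathbb{F}_{q^m}$ is a bijective $\mathbb{F}_q$-linear map $\varphi:\mathbb{F}_{q^m}\to\mathbb{F}_{q^m}$, applied componentwise to vectors. For an $\mathbb{F}_{q^m}$-linear code $\mathcal{C}\subseteq\mathbb{F}_{q^m}^n$, $\varphi$ is linear on $\mathcal{C}$ if $\varphi(\mathcal{C})=\{\varphi(\bm{c}):\bm{c}\in\mathcal{C}\}$ is an $\mathbb{F}_{q^m}$-linear subspace. $\varphi$ is fully linear over $\mathbb{F}_{q^m}$ if it is linear on every $\mathbb{F}_{q^m}$-linear code of every length $n\ge1$. *)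

(* Defs.v *)
From HB Require Import structures.
From mathcomp Require Import all_boot all_order all_algebra all_field.
Set Implicit Arguments. Unset Strict Implicit. Unset Printing Implicit Defensive.
Import GRing.Theory.
Local Open Scope ring_scope.

(* Setting: F = F_q is a finite field, L = F_{q^m} is a finite-dimensional
   field extension of F, with m = \dim_F L and q = #|F|. *)

Definition Fq_lin_aut (F : finFieldType) (L : fieldExtType F) (phi : L -> L) :=
  (forall (a : F) (x y : L), phi (a *: x + y) = a *: phi x + phi y)
  /\ bijective phi.

Definition cwise (L : fieldType) (n : nat) (phi : L -> L) (c : 'rV[L]_n) : 'rV[L]_n :=
  map_mx phi c.

Definition linear_on (L : fieldType) (n : nat) (phi : L -> L)
    (C : {vspace 'rV[L]_n}) :=
  exists D : {vspace 'rV[L]_n},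
    forall v : 'rV[L]_n, v \in D <-> exists2 c, c \in C & v = cwise phi c.

Definition fully_linear (L : fieldType) (phi : L -> L) :=
  forall n : nat, (0 < n)%N -> forall C : {vspace 'rV[L]_n}, linear_on phi C.

(* Main.v *)
From HB Require Import structures.
From mathcomp Require Import all_boot all_order all_algebra all_fingroup all_field.
Require Import Defs.
Import GRing.Theory.
Local Open Scope ring_scope.
From mathcomp Require Import ring.
Section Frob.
Variables (F : finFieldType) (L : fieldExtType F).

Definition frob (j : nat) (x : L) := x ^+ (#|F| ^ j).

Lemma frob1D (x y : L) : (x + y) ^+ #|F| = x ^+ #|F| + y ^+ #|F|.
Proof.
have [p _ pcharFp] := finPcharP F; rewrite (card_pprimeChar pcharFp).
elim: (logn _ _) => // n IHn; rewrite expnSr !exprM {}IHn.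
rewrite -(pchar_lalg L) in pcharFp.
by rewrite -!(pFrobenius_autE pcharFp) rmorphD.
Qed.

Lemma frobD j (x y : L) : frob j (x + y) = frob j x + frob j y.
Proof.
rewrite /frob; elim: j => [|j IH]; first by rewrite !expn0 !expr1.
by rewrite expnSr !exprM IH frob1D.
Qed.

Lemma frobM j (x y : L) : frob j (x * y) = frob j x * frob j y.
Proof. by rewrite /frob exprMn. Qed.

Lemma frob0 j : frob j (0 : L) = 0.
Proof.
have h : (0 < #|F| ^ j)%N by rewrite expn_gt0 (ltnW (finNzRing_gt1 F)).
by rewrite /frob expr0n eqn0Ngt h.
Qed.

Lemma frobA j (a : F) : frob j (a%:A : L) = a%:A.
Proof.
rewrite /frob; elim: j => [|j IH]; first by rewrite expn0 expr1.
by rewrite expnSr exprM IH -in_algE -rmorphXn expf_card.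
Qed.

Lemma frobZ j (a : F) (x : L) : frob j (a *: x) = a *: frob j x.
Proof. by rewrite -[a *: x]mulr_algl -[a *: frob j x]mulr_algl frobM frobA. Qed.

Lemma frobK j (x : L) : (j <= \dim {:L})%N -> frob j (frob (\dim {:L} - j) x) = x.
Proof.
move=> hj; rewrite /frob -exprM -expnD subnK //.
by apply/eqP; rewrite -Fermat's_little_theorem memvf.
Qed.
End Frob.

Section Semi.
Variables (L : fieldType) (f tau tau' : L -> L).
Hypothesis hf : forall a x y, f (a * x + y) = tau a * f x + f y.
Hypothesis hf0 : f 0 = 0.
Hypothesis htau : forall a, tau (tau' a) = a.

Lemma map_semi n (a : L) (u v : 'rV[L]_n) :
  map_mx f (a *: v + u) = tau a *: map_mx f v + map_mx f u.
Proof. by apply/matrixP => r s; rewrite !mxE hf. Qed.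

Lemma map_semi_sum n k (a : 'I_k -> L) (X : 'I_k -> 'rV[L]_n) :
  map_mx f (\sum_(i < k) a i *: X i) = \sum_(i < k) tau (a i) *: map_mx f (X i).
Proof.
elim: k a X => [|k IH] a X.
  by rewrite !big_ord0; apply/matrixP => r s; rewrite !mxE hf0.
by rewrite !big_ord_recr /= addrC map_semi IH addrC.
Qed.

Lemma semi_linear_on n (C : {vspace 'rV[L]_n}) : linear_on f C.
Proof.
pose X := map_tuple (cwise f) (vbasis C).
exists <<X>>%VS => v; split.
  move=> /coord_span ->.
  exists (\sum_i tau' (coord X i v) *: (vbasis C)`_i).
    by apply: memv_suml => i _; apply: memvZ; apply: vbasis_mem; apply: mem_nth; rewrite size_tuple.
  rewrite /cwise map_semi_sum; apply: eq_bigr => i _; rewrite htau.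
  by rewrite (nth_map 0) ?size_tuple.
move=> [c cC ->]; rewrite (coord_vbasis cC) /cwise map_semi_sum.
apply: memv_suml => i _; apply: memvZ; apply: memv_span.
have -> : map_mx f (vbasis C)`_i = X`_i by rewrite (nth_map 0) ?size_tuple.
by apply: mem_nth; rewrite size_tuple.
Qed.
End Semi.

Lemma gal_power (F : finFieldType) (L : splittingFieldType F) (psi : L -> L) :
  (forall x y, psi (x - y) = psi x - psi y) ->
  (forall (a : F) x, psi (a *: x) = a *: psi x) ->
  (forall x y, psi (x * y) = psi x * psi y) -> psi 1 = 1 ->
  exists j : 'I_(\dim {:L}), forall x, psi x = x ^+ (#|F| ^ j).
Proof.
move=> pB pZ pM p1.
pose faM := GRing.isZmodMorphism.Build _ _ psi pB.
pose flM := GRing.isScalable.Build _ _ _ _ psi pZ.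
pose fL : {linear L -> L} := HB.pack psi faM flM.
have /kAut_to_gal[g galg Dg]: kAut 1 {:L} (linfun fL).
  rewrite kAutfE; apply/kHomP_tmp; split=> [x /vlineP[a ->] | x y _ _]; rewrite !lfunE //=.
    by rewrite pZ p1.
have [alpha gen Dalpha] := finField_galois_generator (sub1v {:L}).
have Galpha : ('Gal({:L} / 1) = <[alpha]>)%g by apply/eqP.
have oalpha : #[alpha]%g = \dim {:L}.
  rewrite orderE -Galpha -galois_dim ?finField_galois ?sub1v //.
  by rewrite dimv1 divn1.
have powE k x : (alpha ^+ k)%g x = x ^+ (#|F| ^ k).
  elim: k x => [|k IH] x; first by rewrite gal_id expn0 expr1.
  by rewrite expgSr galM ?memvf // IH Dalpha ?memvf // dimv1 expn1 expnSr exprM.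
move: galg; rewrite Galpha => /cycleP[i Dgi].
have hlt : (i %% #[alpha]%g < \dim {:L})%N by rewrite -oalpha ltn_pmod ?order_gt0.
exists (Ordinal hlt) => x /=.
by rewrite -[psi x]/(fL x) -lfunE Dg ?memvf // Dgi -expg_mod_order powE.
Qed.

Theorem mainTheorem4 (F : finFieldType) (L : fieldExtType F) (phi : L -> L) :
  Fq_lin_aut phi ->
  (fully_linear phi <->
   exists2 beta : L, beta != 0 &
     exists j : 'I_(\dim {:L}), forall mu : L, phi mu = beta * mu ^+ (#|F| ^ j)).
Proof.
move=> [hlin bij]; have inj := bij_inj bij.
have phiD x y : phi (x + y) = phi x + phi y by have := hlin 1 x y; rewrite !scale1r.
have phi0 : phi 0 = 0.
  by apply: (addrI (phi 0)); rewrite -phiD !addr0.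
have phiB x y : phi (x - y) = phi x - phi y.
  by apply/eqP; rewrite eq_sym subr_eq -phiD subrK.
have phiZ (a : F) x : phi (a *: x) = a *: phi x.
  by rewrite -[a *: x]addr0 hlin phi0 addr0.
have phi1 : phi 1 != 0.
  by apply/eqP => h; have := oner_neq0 L; rewrite (inj 1 0) ?eqxx // phi0.
split.
- move=> FL.
  have key l a : phi (l * a) = phi l / phi 1 * phi a.
    pose r := (\row_(i < 2) (if i == ord0 then 1 else a) : 'rV[L]_2).
    have [D HD] := FL 2%N isT <[r]>%VS.
    have w1 : cwise phi r \in D by apply/HD; exists r => //; apply: memv_line.
    have := memvZ (phi l / phi 1) w1 => /HD[c /vlineP[mu ->]] E.
    have E0 := congr1 (fun m : 'rV[L]_2 => m ord0 ord0) E.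
    have E1 := congr1 (fun m : 'rV[L]_2 => m ord0 (lift ord0 ord0)) E.
    move: E0 E1; rewrite /cwise !mxE /= mulr1 divfK // => /inj <-.
    by rewrite mulrC => ->.
  pose psi x := phi x / phi 1.
  have psiB x y : psi (x - y) = psi x - psi y by rewrite /psi phiB mulrBl.
  have psiZ (a : F) x : psi (a *: x) = a *: psi x by rewrite /psi phiZ scalerAl.
  have psiM x y : psi (x * y) = psi x * psi y by rewrite /psi key; field.
  have [j Dj] := @gal_power F (FinSplittingFieldType F L) psi psiB psiZ psiM (divff phi1).
  exists (phi 1) => //; exists j => mu.
  by rewrite -Dj /psi mulrC divfK.
- move=> [beta nz [j Dphi]] n _ C.
  apply: (@semi_linear_on L phi (frob F L j) (frob F L (\dim {:L} - j))).
  + by move=> a x y; rewrite !Dphi -!/(frob F L j _) frobD frobM; ring.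
  + by rewrite Dphi -/(frob F L j _) frob0 mulr0.
  + by move=> a; rewrite frobK // ltnW.
Qed.
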